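(* Let $G\in\mathfrak{R}H^\infty_{m\times p}$ and $K\in\mathfrak{R}H^\infty_{m\times q}$ be given by the minimal realization \[ \begin{bmatrix} G(z) & K(z)\end{bmatrix}=\begin{bmatrix} D_1 & D_2\end{bmatrix}+zC(I_n-zA)^{-1}\begin{bmatrix} B_1 & B_2\end{bmatrix}, \] with $A$ a stable $n\times n$ matrix. Let $F\in\mathfrak{R}H^\infty_{m\times r}$ be a function of the form $F(z)=D_3+zC(I_n-zA)^{-1}B_3$ such that $T_GT_G^*-T_KT_K^*-T_FT_F^*=W_{obs}(P_3+P_2-P_1)W_{obs}^*$ and $P_3+P_2-P_1\ge 0$, where $P_3$ is the controllability Gramian of $\{A,B_3\}$. Let $Y=\sum_{\nu\ge0}(A^* )^\nu C^*CA^\nu$ (the solution of $Y=A^*YA+C^*C$), set $\Upsilon=(P_3+P_2-P_1)^{1/2}$, and let \[ U=\begin{bmatrix}\alpha&\beta_1&\beta_2\\ \gamma&\delta_1&\delta_2\end{bmatrix}:\mathbb{C}^n\oplus\mathbb{C}^q\oplus\mathbb{C}^r\to\mathbb{C}^n\oplus\mathbb{C}^p \] be defined by \[ U=\begin{bmatrix}\Upsilon Y\Upsilon & \Upsilon YB_1\\ B_1^*Y\Upsilon & D_1^*D_1+B_1^*YB_1\end{bmatrix}^{+} \begin{bmatrix}\Upsilon YA\Upsilon & \Upsilon YB_2 & \Upsilon YB_3\\ D_1^*C\Upsilon+B_1^*YA\Upsilon & D_1^*D_2+B_1^*YB_2 & D_1^*D_3+B_1^*YB_3\end{bmatrix}, \]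 where ${}^+$ denotes the Moore--Penrose generalized inverse. Then $U$ is a partial isometry and: (i) the function $X(z)=\delta_1+z\gamma(I-z\alpha)^{-1}\beta_1$ is a $p\times q$ stable rational matrix function satisfying $G(z)X(z)=K(z)$ for $z\in\mathbb{D}$ and $\sup_{z\in\mathbb{D}}\|X(z)\|\le 1$; (ii) the function $\Psi(z)=\delta_2+z\gamma(I-z\alpha)^{-1}\beta_2$ is a $p\times r$ stable rational matrix function with $\sup_{z\in\mathbb{D}}\|\Psi(z)\|\le1$ and $G(z)\Psi(z)=F(z)$.
   Context: $\mathfrak{R}H^\infty_{k\times l}$ denotes the $k\times l$ rational matrix functions with no poles in the closed unit disc; $\mathbb{D}$ is the open unit disc. A square matrix is stable if all eigenvalues lie in $\mathbb{D}$. A realization is minimal if it has the smallest possible state dimension (equivalently, it is observable and controllable). $\ell^2_+(\mathbb{C}^k)$ is the space of square summable $\mathbb{C}^k$-valued sequences indexed by $j\ge0$; for a matrix $H^\infty$ function $\Omega$ with Taylor coefficients $\Omega_j$, $T_\Omega$ is the block lower triangular Toeplitz operator with $(i,j)$ block $\Omega_{i-j}$ (zero if $i<j$). $W_{obs}=\operatorname{col}(CA^j)_{j\ge0}:\mathbb{C}^n\to\ell^2_+(\mathbb{C}^m)$. For $j=1,2,3$, $P_j=\sum_{\nu\ge0}A^\nu B_jB_j^*(A^* )^\nu$. The Moore--Penrose inverse $T^+$ of a matrix $T$ is the unique matrix with $T^+T$ and $TT^+$ the orthogonal projections onto $\operatorname{Im}T^*$ and $\operatorname{Im}T$, respectively.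 *)

(* Defs.v *)
From mathcomp Require Export all_boot all_algebra complex reals.
Set Implicit Arguments.
Unset Strict Implicit.
Unset Printing Implicit Defensive.
Import GRing.Theory Num.Theory.
Local Open Scope ring_scope.

Section Defs.
Variable C : numClosedFieldType.

Definition adjmx m n (M : 'M[C]_(m, n)) : 'M[C]_(n, m) := (map_mx Num.conj M)^T.

Definition psdmx n (M : 'M[C]_n) : Prop :=
  adjmx M = M /\ forall v : 'cV[C]_n, 0 <= (adjmx v *m M *m v) 0 0.

Definition stable_mx n (A : 'M[C]_n) : Prop :=
  forall l : C, eigenvalue A l -> `|l| < 1.

(* observability of {Cm, A}: ker W_obs = 0 *)
Definition observable k n (Cm : 'M[C]_(k, n)) (A : 'M[C]_n) : Prop :=
  forall x : 'cV[C]_n, (forall j, Cm *m A ^+ j *m x = 0) -> x = 0.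

(* controllability of {A, B}: the ranges of A^j B span C^n *)
Definition controllable n k (A : 'M[C]_n) (B : 'M[C]_(n, k)) : Prop :=
  forall y : 'rV[C]_n, (forall j, y *m A ^+ j *m B = 0) -> y = 0.

Definition cvg_seq (u : nat -> C) (l : C) : Prop :=
  forall e : C, 0 < e -> exists N, forall k, (N <= k)%N -> `|u k - l| < e.

Definition mx_series_sum m n (u : nat -> 'M[C]_(m, n)) (S : 'M[C]_(m, n)) :
  Prop := forall i j, cvg_seq (fun N => \sum_(k < N) u k i j) (S i j).

Definition ctrl_gramian n k (A : 'M[C]_n) (B : 'M[C]_(n, k)) (P : 'M[C]_n) :=
  mx_series_sum (fun nu => A ^+ nu *m B *m adjmx B *m (adjmx A) ^+ nu) P.

Definition obs_gramian k n (Cm : 'M[C]_(k, n)) (A : 'M[C]_n) (Y : 'M[C]_n) :=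
  mx_series_sum (fun nu => (adjmx A) ^+ nu *m adjmx Cm *m Cm *m A ^+ nu) Y.

Definition orth_proj n (P : 'M[C]_n) : Prop := P *m P = P /\ adjmx P = P.

Definition moore_penrose m n (T : 'M[C]_(m, n)) (X : 'M[C]_(n, m)) : Prop :=
  [/\ T *m X *m T = T, X *m T *m X = X,
      adjmx (T *m X) = T *m X & adjmx (X *m T) = X *m T].

Definition partial_isometry m n (U : 'M[C]_(m, n)) : Prop :=
  orth_proj (adjmx U *m U).

Definition realize p q n (D : 'M[C]_(p, q)) (Cm : 'M[C]_(p, n)) (A : 'M[C]_n)
  (B : 'M[C]_(n, q)) (z : C) : 'M[C]_(p, q) :=
  D + z *: (Cm *m invmx (1%:M - z *: A) *m B).

(* Taylor coefficients of the realization: D, Cm B, Cm A B, Cm A^2 B, ... *)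
Definition markov p q n (D : 'M[C]_(p, q)) (Cm : 'M[C]_(p, n)) (A : 'M[C]_n)
  (B : 'M[C]_(n, q)) (j : nat) : 'M[C]_(p, q) :=
  if j is k.+1 then Cm *m A ^+ k *m B else D.

(* (i,j) block of T_Omega T_Omega^H for the block lower triangular Toeplitz
   operator T_Omega with coefficient sequence Om :
   sum_{l <= min(i,j)} Om_{i-l} Om_{j-l}^*  *)
Definition toep_gram_block p q (Om : nat -> 'M[C]_(p, q)) (i j : nat)
  : 'M[C]_p := \sum_(l < (minn i j).+1) Om (i - l)%N *m adjmx (Om (j - l)%N).

Definition stable_rational p q (dom : C -> Prop) (f : C -> 'M[C]_(p, q)) :=
  exists (N : 'M[{poly C}]_(p, q)) (d : {poly C}),
    (forall z : C, `|z| <= 1 -> d.[z] != 0) /\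
    (forall z : C, dom z -> f z = map_mx (fun P => P.[z] / d.[z]) N).

Definition contraction p q (M : 'M[C]_(p, q)) : Prop :=
  forall v : 'cV[C]_q,
    (adjmx (M *m v) *m (M *m v)) 0 0 <= (adjmx v *m v) 0 0.

End Defs.

(* Main.v *)
Require Import Defs.
From mathcomp Require Import all_boot all_order all_algebra complex reals.
Import Order.TTheory GRing.Theory Num.Theory.
Local Open Scope ring_scope.

Section Gen.
Variable C : numClosedFieldType.
Implicit Types z : C.

Lemma adjmxE m n (M : 'M[C]_(m,n)) i j : adjmx M i j = (M j i)^*.
Proof. by rewrite /adjmx !mxE. Qed.

Lemma adjmxK m n (M : 'M[C]_(m,n)) : adjmx (adjmx M) = M.
Proof. by apply/matrixP=> i j; rewrite !adjmxE conjCK. Qed.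

Lemma adjmxM m n k (M : 'M[C]_(m,n)) (N : 'M[C]_(n,k)) :
  adjmx (M *m N) = adjmx N *m adjmx M.
Proof.
apply/matrixP=> i j; rewrite /adjmx !mxE rmorph_sum; apply: eq_bigr=> l _.
by rewrite !mxE rmorphM mulrC.
Qed.

Lemma adjmxD m n (M N : 'M[C]_(m,n)) : adjmx (M + N) = adjmx M + adjmx N.
Proof. by apply/matrixP=> i j; rewrite /adjmx !mxE rmorphD. Qed.

Lemma adjmxN m n (M : 'M[C]_(m,n)) : adjmx (- M) = - adjmx M.
Proof. by apply/matrixP=> i j; rewrite /adjmx !mxE rmorphN. Qed.

Lemma adjmxB m n (M N : 'M[C]_(m,n)) : adjmx (M - N) = adjmx M - adjmx N.
Proof. by rewrite adjmxD adjmxN. Qed.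

Lemma adjmxZ m n z (M : 'M[C]_(m,n)) : adjmx (z *: M) = z^* *: adjmx M.
Proof. by apply/matrixP=> i j; rewrite /adjmx !mxE rmorphM. Qed.

Lemma adjmx0 m n : adjmx (0 : 'M[C]_(m,n)) = 0.
Proof. by apply/matrixP=> i j; rewrite /adjmx !mxE rmorph0. Qed.

Lemma adjmx1 n : adjmx (1%:M : 'M[C]_n) = 1%:M.
Proof.
apply/matrixP=> i j; rewrite /adjmx !mxE eq_sym.
by rewrite rmorph_nat.
Qed.

Lemma adjmx_scalar n z : adjmx (z%:M : 'M[C]_n) = z^*%:M.
Proof. by rewrite -(scalemx1 _ z) adjmxZ adjmx1 scalemx1. Qed.

Lemma adjmxX n (M : 'M[C]_n) k : adjmx (M ^+ k) = (adjmx M) ^+ k.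
Proof.
elim: k => [|k IH]; first by rewrite !expr0 adjmx1.
by rewrite exprS -mulmxE adjmxM IH mulmxE -exprSr.
Qed.

Lemma adjmx_block m1 m2 n1 n2 (a : 'M[C]_(m1,n1)) (b : 'M[C]_(m1,n2))
  (c : 'M[C]_(m2,n1)) (d : 'M[C]_(m2,n2)) :
  adjmx (block_mx a b c d) = block_mx (adjmx a) (adjmx c) (adjmx b) (adjmx d).
Proof. by rewrite /adjmx map_block_mx tr_block_mx. Qed.

Lemma adjmx_row m n1 n2 (a : 'M[C]_(m,n1)) (b : 'M[C]_(m,n2)) :
  adjmx (row_mx a b) = col_mx (adjmx a) (adjmx b).
Proof. by rewrite /adjmx map_row_mx tr_row_mx. Qed.

Lemma adjmx_col m1 m2 n (a : 'M[C]_(m1,n)) (b : 'M[C]_(m2,n)) :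
  adjmx (col_mx a b) = row_mx (adjmx a) (adjmx b).
Proof. by rewrite /adjmx map_col_mx tr_col_mx. Qed.

Definition nq {n} (v : 'cV[C]_n) : C := (adjmx v *m v) 0 0.

Lemma nqE n (v : 'cV[C]_n) : nq v = \sum_i v i 0 * (v i 0)^*.
Proof. by rewrite /nq mxE; apply: eq_bigr=> i _; rewrite adjmxE mulrC. Qed.

Lemma nq_ge0 n (v : 'cV[C]_n) : 0 <= nq v.
Proof. by rewrite nqE sumr_ge0 // => i _; rewrite mul_conjC_ge0. Qed.

Lemma nq_eq0 n (v : 'cV[C]_n) : nq v = 0 -> v = 0.
Proof.
rewrite nqE => /psumr_eq0P H; apply/matrixP=> i j.
rewrite (ord1 j) mxE; apply/eqP; rewrite -mul_conjC_eq0; apply/eqP.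
by apply: H => // l _; rewrite mul_conjC_ge0.
Qed.

Lemma mx_adj_eq0 m n (X : 'M[C]_(m,n)) : X *m adjmx X = 0 -> X = 0.
Proof.
move=> H; apply/matrixP=> i j; rewrite mxE.
have : (X *m adjmx X) i i = 0 by rewrite H mxE.
rewrite mxE => /psumr_eq0P H1; apply/eqP; rewrite -mul_conjC_eq0; apply/eqP.
by rewrite -adjmxE; apply: H1 => // l _; rewrite adjmxE mul_conjC_ge0.
Qed.

Lemma nq_col n1 n2 (a : 'cV[C]_n1) (b : 'cV[C]_n2) :
  nq (col_mx a b) = nq a + nq b.
Proof. by rewrite /nq adjmx_col mul_row_col mxE. Qed.

Lemma nqZ n z (v : 'cV[C]_n) : nq (z *: v) = z^* * z * nq v.
Proof. by rewrite /nq adjmxZ -scalemxAl -scalemxAr !mxE mulrA. Qed.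


Lemma cvg_add (u v : nat -> C) a b :
  cvg_seq u a -> cvg_seq v b -> cvg_seq (fun N => u N + v N) (a + b).
Proof.
move=> Hu Hv e e0; have e20 : 0 < e / 2 by rewrite divr_gt0.
have [N1 H1] := Hu _ e20; have [N2 H2] := Hv _ e20.
exists (maxn N1 N2) => k Hk.
have -> : u k + v k - (a + b) = (u k - a) + (v k - b) by rewrite opprD addrACA.
rewrite (le_lt_trans (ler_normD _ _)) // (splitr e) ltrD //.
  by apply: H1; apply: leq_trans Hk; apply: leq_maxl.
by apply: H2; apply: leq_trans Hk; apply: leq_maxr.
Qed.

Lemma cvg_scale (u : nat -> C) a c :
  cvg_seq u a -> cvg_seq (fun N => c * u N) (c * a).
Proof.
move=> Hu e e0; have c0 : 0 < `|c| + 1 by rewrite ltr_wpDl.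
have [N H] := Hu (e / (`|c| + 1)) (divr_gt0 e0 c0).
exists N => k Hk; rewrite -mulrBr normrM.
apply: (le_lt_trans (y := `|c| * (e / (`|c| + 1)))).
  by rewrite ler_wpM2l // ltW // H.
by rewrite mulrA ltr_pdivrMr // mulrC ltr_pM2l // ltrDl ltr01.
Qed.

Lemma cvg_cst (a : C) : cvg_seq (fun _ => a) a.
Proof. by move=> e e0; exists 0%N => k _; rewrite subrr normr0. Qed.

Lemma cvg_ext (u v : nat -> C) a : (forall N, u N = v N) -> cvg_seq u a -> cvg_seq v a.
Proof. by move=> E H e e0; have [N HN] := H e e0; exists N => k Hk; rewrite -E HN. Qed.

Lemma cvg_sum (I : Type) (s : seq I) (u : I -> nat -> C) l :
  (forall i, cvg_seq (u i) (l i)) ->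
  cvg_seq (fun N => \sum_(i <- s) u i N) (\sum_(i <- s) l i).
Proof.
move=> H; elim: s => [|x s IH].
  rewrite big_nil; apply: (@cvg_ext (fun _ => 0)); last exact: cvg_cst.
  by move=> N; rewrite big_nil.
rewrite big_cons; apply: (@cvg_ext (fun N => u x N + \sum_(i <- s) u i N)).
  by move=> N; rewrite big_cons.
exact: cvg_add.
Qed.


Lemma form_sum n (w : 'cV[C]_n) (M : 'M[C]_n) :
  (adjmx w *m M *m w) 0 0 = \sum_j \sum_i ((w i 0)^* * w j 0) * M i j.
Proof.
rewrite mxE; apply: eq_bigr => j _; rewrite mxE big_distrl /=.
apply: eq_bigr => i _; rewrite adjmxE; by rewrite mulrAC mulrC mulrA.
Qed.


Lemma obs_pos k n (Cm : 'M[C]_(k,n)) (A Y : 'M[C]_n) :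
  obs_gramian Cm A Y -> observable Cm A ->
  forall (w : 'cV[C]_n) t, 0 <= t -> (adjmx w *m Y *m w) 0 0 + t = 0 -> w = 0.
Proof.
move=> HY Hobs w t t0 Ht.
pose term j := adjmx A ^+ j *m adjmx Cm *m Cm *m A ^+ j.
pose s N := \sum_(j < N) nq (Cm *m A ^+ j *m w).
have Hterm j : nq (Cm *m A ^+ j *m w) = (adjmx w *m term j *m w) 0 0.
  by rewrite /nq /term !adjmxM adjmxX !mulmxA.
have Hcv : cvg_seq s ((adjmx w *m Y *m w) 0 0).
  apply: (@cvg_ext (fun N => \sum_j \sum_i ((w i 0)^* * w j 0) *
                      (\sum_(kk < N) term kk) i j)).
    move=> N; rewrite -form_sum /s.
    rewrite mulmx_sumr mulmx_suml summxE; apply: eq_bigr => j _.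
    by rewrite Hterm.
  rewrite form_sum; apply: cvg_sum => j; apply: cvg_sum => i.
  apply: cvg_scale; move: (HY i j); apply: cvg_ext => N.
  by rewrite summxE.
have s_ge0 N : 0 <= s N by rewrite /s sumr_ge0 // => j _; apply: nq_ge0.
have s_mono K M : (K <= M)%N -> s K <= s M.
  move=> KM; rewrite /s -!(big_mkord xpredT (fun j => nq (Cm *m A ^+ j *m w))).
  rewrite (@big_cat_nat _ _ _ K 0 M _ _ (leq0n K) KM) /= lerDl.
  by rewrite sumr_ge0 // => j _; apply: nq_ge0.
have l_eq : (adjmx w *m Y *m w) 0 0 = - t by apply/eqP; rewrite -addr_eq0 Ht.
have s0 K : s K = 0.
  have := s_ge0 K; rewrite le_eqVlt => /orP [/eqP <- // | sK0].
  have [N HN] := Hcv _ sK0.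
  have H1 := HN (maxn N K) (leq_maxl _ _).
  rewrite l_eq opprK ger0_norm ?addr_ge0 // in H1.
  have H2 : s K <= s (maxn N K) + t.
    by apply: (le_trans (s_mono _ _ (leq_maxr N K))); rewrite lerDl.
  by have := lt_le_trans H1 H2; rewrite ltxx.
have Cw j : Cm *m A ^+ j *m w = 0.
  apply: nq_eq0.
  have H := @psumr_eq0P _ _ xpredT (fun i : 'I_j.+1 => nq (Cm *m A ^+ i *m w))
     (fun i _ => nq_ge0 _ _) (s0 j.+1).
  exact: (H ord_max isT).
by apply: Hobs => j; rewrite Cw.
Qed.


Lemma col_entry m n (M : 'M[C]_(m,n)) i j : M i j = (M *m (delta_mx j 0 : 'cV[C]_n)) i 0.
Proof. by rewrite -colE mxE. Qed.

Lemma lurk a b c (M1 : 'M[C]_(a,b)) (M2 : 'M[C]_(a,c)) (W : 'M[C]_a)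
  (Mp : 'M[C]_b) :
  M1 *m adjmx M1 = M2 *m adjmx M2 ->
  (forall u : 'cV_b, (adjmx (M1 *m u) *m W *m (M1 *m u)) 0 0 = 0 -> M1 *m u = 0) ->
  moore_penrose (adjmx M1 *m W *m M1) Mp ->
  let U := Mp *m (adjmx M1 *m W *m M2) in
  [/\ M1 *m U = M2, U *m adjmx U *m U = U & exists G, U = adjmx M1 *m G].
Proof.
move=> H12 Hdef [h1 h2 h3 h4] U.
set S := adjmx M1 *m W *m M1 in h1 h2 h3 h4.
set Pi := Mp *m S.
set G := Mp *m adjmx M1 *m W.
have PiG : Pi = G *m M1 by rewrite /Pi /S /G !mulmxA.
have PiA : adjmx Pi = Pi by [].
have M1Pi : M1 *m Pi = M1.
  have SZ : S *m (1%:M - Pi) = 0.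
    by rewrite mulmxBr mulmx1 /Pi mulmxA h1 subrr.
  apply/eqP; rewrite eq_sym -subr_eq0; apply/eqP.
  rewrite -{1}[M1]mulmx1 -mulmxBr.
  apply/matrixP => i j; rewrite col_entry -mulmxA Hdef; first by rewrite !mxE.
  set u := (_ *m delta_mx j 0).
  have -> : adjmx (M1 *m u) *m W *m (M1 *m u) = adjmx u *m (S *m u).
    by rewrite adjmxM /S !mulmxA.
  by rewrite {2}/u [S *m _]mulmxA SZ mul0mx mulmx0 mxE.
have EM1 : M1 *m Mp *m adjmx M1 *m W *m M1 = M1.
  by rewrite -[RHS]M1Pi /Pi /S !mulmxA.
have HM2 : M1 *m U = M2.
  set E := M1 *m Mp *m adjmx M1 *m W.
  have FM1 : (1%:M - E) *m M1 = 0 by rewrite mulmxBl mul1mx /E EM1 subrr.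
  have : (1%:M - E) *m M2 = 0.
    apply: mx_adj_eq0; rewrite adjmxM !mulmxA -[_ *m M2 *m adjmx M2]mulmxA -H12.
    by rewrite mulmxA FM1 !mul0mx.
  move/eqP; rewrite mulmxBl mul1mx subr_eq0 => /eqP ->.
  by rewrite /U /E !mulmxA.
have PiPi : Pi *m Pi = Pi by rewrite /Pi mulmxA h2.
have PiU : Pi *m U = U by rewrite /U /Pi mulmxA h2.
have UPi : adjmx U *m Pi = adjmx U by rewrite -{2}PiU adjmxM PiA.
have PUUP : Pi *m U *m adjmx U *m Pi = Pi.
  have -> : Pi *m U *m adjmx U *m Pi = G *m (M1 *m U *m adjmx (M1 *m U)) *m adjmx G.
    by rewrite {1}PiG -PiA PiG !adjmxM !mulmxA.
  by rewrite HM2 -H12 mulmxA -mulmxA -adjmxM -PiG PiA PiPi.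
clearbody U G Pi; split => //.
  by rewrite -{1}PiU -UPi !mulmxA PUUP PiU.
exists (adjmx G *m U); by rewrite mulmxA -adjmxM -PiG PiA PiU.
Qed.


Lemma obs_mx k n q (Cm : 'M[C]_(k,n)) (A : 'M[C]_n) (X : 'M[C]_(n,q)) :
  observable Cm A -> (forall j, Cm *m A ^+ j *m X = 0) -> X = 0.
Proof.
move=> Hobs H; apply/matrixP => i j; rewrite col_entry.
have -> : X *m (delta_mx j 0 : 'cV[C]_q) = 0 by apply: Hobs => l; rewrite mulmxA H mul0mx.
by rewrite !mxE.
Qed.

Lemma toep_rec p q (Om : nat -> 'M[C]_(p,q)) i j :
  toep_gram_block Om i.+1 j.+1 = Om i.+1 *m adjmx (Om j.+1) + toep_gram_block Om i j.
Proof.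
rewrite /toep_gram_block minnSS big_ord_recl /= !subn0.
by [].
Qed.

Lemma toep00 p q (Om : nat -> 'M[C]_(p,q)) :
  toep_gram_block Om 0 0 = Om 0%N *m adjmx (Om 0%N).
Proof. by rewrite /toep_gram_block big_ord1. Qed.

Lemma toepS0 p q (Om : nat -> 'M[C]_(p,q)) i :
  toep_gram_block Om i.+1 0 = Om i.+1 *m adjmx (Om 0%N).
Proof. by rewrite /toep_gram_block minn0 big_ord1 !subn0. Qed.

Lemma col_eig n (A : 'M[C]_n) (y : 'cV[C]_n) l :
  y != 0 -> A *m y = l *: y -> eigenvalue A l.
Proof.
move=> y0 Hy; apply/eigenvalueP.
have : \det (A - l%:M) == 0.
  rewrite -det_tr; apply/det0P; exists y^T.
    by apply: contra y0 => /eqP H; apply/eqP; apply: trmx_inj; rewrite H trmx0.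
  by rewrite -trmx_mul mulmxBl Hy mul_scalar_mx subrr trmx0.
move/det0P => [v v0 Hv]; exists v => //.
by apply/eqP; rewrite -subr_eq0 -mul_mx_scalar -mulmxBr Hv.
Qed.

Lemma nonunit_col n (M : 'M[C]_n) : M \notin unitmx ->
  exists2 x : 'cV[C]_n, x != 0 & M *m x = 0.
Proof.
rewrite unitmxE unitfE negbK -det_tr => /det0P [v v0 Hv].
exists v^T.
  by apply: contra v0 => /eqP H; apply/eqP; apply: trmx_inj; rewrite H trmx0.
by apply: trmx_inj; rewrite trmx_mul trmxK trmx0.
Qed.

Lemma nonunit_row n (M : 'M[C]_n) : M \notin unitmx ->
  exists2 v : 'rV[C]_n, v != 0 & v *m M = 0.
Proof. by rewrite unitmxE unitfE negbK => /det0P. Qed.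

Lemma stable_unit n (A : 'M[C]_n) z : stable_mx A -> `|z| < 1 ->
  (1%:M - z *: A) \in unitmx.
Proof.
move=> HA z1; apply/negPn/negP => /nonunit_row [v v0 Hv].
have ev : v = z *: (v *m A).
  have E : v *m (1%:M - z *: A) = v - z *: (v *m A).
    by rewrite mulmxBr mulmx1 scalemxAr.
  by apply/eqP; rewrite -subr_eq0 -E Hv.
have z0 : z != 0 by apply: contra v0 => /eqP z0; rewrite ev z0 scale0r.
have : eigenvalue A z^-1.
  apply/eigenvalueP; exists v => //.
  by rewrite {2}ev scalerA mulVf // scale1r.
move/HA; rewrite normfV invf_lt1 ?normr_gt0 //.
by move/(lt_trans z1); rewrite ltxx.
Qed.

Lemma mxBE m n (A B : 'M[C]_(m,n)) i j : (A - B) i j = A i j - B i j.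
Proof. by rewrite !mxE. Qed.

Lemma contr_of_pi a b (U : 'M[C]_(a,b)) (v : 'cV[C]_b) :
  U *m adjmx U *m U = U -> nq (U *m v) <= nq v.
Proof.
move=> HU; set P := adjmx U *m U.
have PP : P *m P = P by rewrite /P -!mulmxA [U *m (adjmx U *m U)]mulmxA HU.
have PA : adjmx P = P by rewrite /P adjmxM adjmxK.
have IP : adjmx (1%:M - P) *m (1%:M - P) = 1%:M - P.
  by rewrite adjmxB adjmx1 PA mulmxBl mul1mx mulmxBr mulmx1 PP subrr subr0.
have NU : nq (U *m v) = (adjmx v *m P *m v) 0 0.
  by rewrite /nq adjmxM /P !mulmxA.
clearbody P.
have E : nq v - nq (U *m v) = nq ((1%:M - P) *m v).
  rewrite NU /nq adjmxM !mulmxA -[adjmx v *m adjmx _ *m _]mulmxA IP.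
  by rewrite mulmxBr mulmx1 mulmxBl mxBE.
by rewrite -subr_ge0 E nq_ge0.
Qed.


Lemma nq0 n : nq (0 : 'cV[C]_n) = 0.
Proof. by rewrite /nq mulmx0 mxE. Qed.

Lemma nz_ge1 z : `|z| <= 1 -> z^* * z <= 1.
Proof.
move=> z1; rewrite mulrC -normCK.
by rewrite expr_le1 // normr_ge0.
Qed.

Lemma contr_real n p q (alpha : 'M[C]_n) (beta : 'M[C]_(n,q)) (gamma : 'M[C]_(p,n))
  (delta : 'M[C]_(p,q)) z :
  (forall v, nq (block_mx alpha beta gamma delta *m v) <= nq v) -> `|z| <= 1 ->
  (1%:M - z *: alpha) \in unitmx -> contraction (realize delta gamma alpha beta z).
Proof.
move=> Hc z1 Hu v; rewrite -/(nq _) -/(nq v).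
set x0 := invmx (1%:M - z *: alpha) *m beta *m v.
have Hx : alpha *m (z *: x0) + beta *m v = x0.
  have : (1%:M - z *: alpha) *m x0 = beta *m v by rewrite /x0 -mulmxA mulKVmx.
  rewrite mulmxBl mul1mx -scalemxAl scalemxAr => <-.
  by rewrite addrC subrK.
have Hy : gamma *m (z *: x0) + delta *m v = realize delta gamma alpha beta z *m v.
  by rewrite /realize mulmxDl addrC -scalemxAl -scalemxAr /x0 !mulmxA.
have := Hc (col_mx (z *: x0) v).
rewrite mul_block_col Hx Hy !nq_col nqZ => H.
have H2 : z^* * z * nq x0 <= nq x0 by rewrite ler_piMl ?nq_ge0 ?nz_ge1.
have := le_trans H (lerD H2 (lexx (nq v))).
by rewrite lerD2l.
Qed.

Lemma alpha_unit n m p s (A Ups : 'M[C]_n) (Cm : 'M[C]_(m,n)) (B1 : 'M[C]_(n,p))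
  (D1 : 'M[C]_(m,p)) (U : 'M[C]_(n+p, n+s)) (G : 'M[C]_(n+m, n+s)) z :
  stable_mx A -> (forall v, nq (U *m v) <= nq v) ->
  Ups *m ulsubmx U + B1 *m dlsubmx U = A *m Ups ->
  U = adjmx (block_mx Ups B1 0 D1) *m G ->
  (forall x : 'cV_n, Ups *m x = 0 ->
     block_mx Ups B1 0 D1 *m (U *m col_mx x 0) = 0) ->
  `|z| <= 1 -> (1%:M - z *: ulsubmx U) \in unitmx.
Proof.
move=> HA Hc eqA HG HM z1.
apply/negPn/negP => /nonunit_col [x x0 Hx].
have ex : x = z *: (ulsubmx U *m x).
  by apply/eqP; rewrite -subr_eq0 -Hx mulmxBl mul1mx -scalemxAl.
have z0 : z != 0 by apply: contra x0 => /eqP z0; rewrite ex z0 scale0r.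
have ax : ulsubmx U *m x = z^-1 *: x by rewrite {2}ex scalerA mulVf // scale1r.
have Uc : U *m col_mx x 0 = col_mx (ulsubmx U *m x) (dlsubmx U *m x).
  by rewrite -{1}[U]submxK mul_block_col !mulmx0 !addr0.
have nzpos : 0 < `|z| by rewrite normr_gt0.
have Ha : nq x <= nq (ulsubmx U *m x).
  rewrite ax nqZ ler_peMl ?nq_ge0 // mulrC -normCK normfV.
  by apply: exprn_ege1; rewrite invf_ge1.
have gx : dlsubmx U *m x = 0.
  apply: nq_eq0; apply/eqP; rewrite eq_le nq_ge0 andbT.
  have H1 := Hc (col_mx x 0); rewrite Uc !nq_col nq0 addr0 in H1.
  have := le_trans H1 Ha; by rewrite -{2}[nq (ulsubmx U *m x)]addr0 lerD2l.
have Ux : Ups *m x = 0.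
  have E : A *m (Ups *m x) = z^-1 *: (Ups *m x).
    by rewrite mulmxA -eqA mulmxDl -!mulmxA gx mulmx0 addr0 ax scalemxAr.
  case: (eqVneq (Ups *m x) 0) => // Hne.
  have := HA _ (col_eig _ _ _ _ Hne E); rewrite normfV invf_lt1 //.
  by move/(le_lt_trans z1); rewrite ltxx.
have : U *m col_mx x 0 = 0.
  apply: nq_eq0; rewrite /nq {2}HG -mulmxA mulmxA -adjmxM HM // adjmx0 mul0mx mxE.
  done.
rewrite Uc => /eqP; rewrite col_mx_eq0 => /andP [/eqP a0 _].
by move: x0; rewrite ex a0 scaler0 eqxx.
Qed.


Lemma zmod_aux (V : zmodType) (x a b : V) : x - a - (x - b) = b - a.
Proof. by rewrite opprB addrC addrA addrNK. Qed.

Lemma zmod_aux2 (V : zmodType) (x a b c : V) :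
  x + a + (b + (c - a)) = x + (c + b).
Proof. by rewrite -addrA; congr (_ + _); rewrite addrCA [a + _]addrCA subrr addr0 addrC. Qed.

Lemma zL1 (V : zmodType) (a b c x : V) : a - b - c = x -> a = x + (b + c).
Proof. by move=> <-; rewrite -[a - b - c]addrA -opprD subrK. Qed.

Lemma zL2 (V : zmodType) (a b c d e : V) : a - b - c = d - e -> e + a = d + (b + c).
Proof. by move=> /(zL1 _) ->; rewrite addrA [e + _]addrC subrK. Qed.
Arguments zL1 {V a b c x}.
Arguments zL2 {V a b c d e}.

Lemma realize_mul n k m p q (A : 'M[C]_n) (Cm : 'M[C]_(m,n)) (B1 : 'M[C]_(n,p))
  (D1 : 'M[C]_(m,p)) (alpha : 'M[C]_k) (beta : 'M[C]_(k,q)) (gamma : 'M[C]_(p,k))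
  (delta : 'M[C]_(p,q)) (Ups : 'M[C]_(n,k)) (B2 : 'M[C]_(n,q)) (D2 : 'M[C]_(m,q)) z :
  (1%:M - z *: A) \in unitmx -> (1%:M - z *: alpha) \in unitmx ->
  Ups *m alpha + B1 *m gamma = A *m Ups -> Ups *m beta + B1 *m delta = B2 ->
  D1 *m gamma = Cm *m Ups -> D1 *m delta = D2 ->
  realize D1 Cm A B1 z *m realize delta gamma alpha beta z = realize D2 Cm A B2 z.
Proof.
move=> uA ua eqA eqB eqC eqD.
set RA := invmx (1%:M - z *: A); set Ra := invmx (1%:M - z *: alpha).
have eqA' : z *: (B1 *m gamma) = Ups *m (1%:M - z *: alpha) - (1%:M - z *: A) *m Ups.
  have -> : B1 *m gamma = A *m Ups - Ups *m alpha by rewrite -eqA [Ups *m alpha + _]addrC addrK.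
  by rewrite mulmxBr mulmx1 mulmxBl mul1mx -scalemxAr -scalemxAl scalerBr zmod_aux.
have key : RA *m (z *: (B1 *m gamma)) *m Ra = RA *m Ups - Ups *m Ra.
  by rewrite eqA' mulmxBr mulmxBl !mulmxA mulmxK // mulVmx // mul1mx.
rewrite /realize -/RA -/Ra mulmxDl !mulmxDr eqD.
rewrite -!scalemxAr -!scalemxAl !mulmxA eqC -eqB.
have K2 : z *: (Cm *m RA *m B1 *m gamma *m Ra *m beta) =
          Cm *m (RA *m Ups - Ups *m Ra) *m beta.
  rewrite -key; do 3! rewrite -?scalemxAr -?scalemxAl.
  by rewrite !mulmxA.
rewrite K2 mulmxBr mulmxBl mulmxDr !mulmxA !scalerDr scalerN.
exact: zmod_aux2.
Qed.


Lemma stab_rat p q n (delta : 'M[C]_(p,q)) (gamma : 'M[C]_(p,n)) (alpha : 'M[C]_n)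
  (beta : 'M[C]_(n,q)) :
  (forall z, `|z| <= 1 -> (1%:M - z *: alpha) \in unitmx) ->
  stable_rational (fun z => (1%:M - z *: alpha) \in unitmx) (realize delta gamma alpha beta).
Proof.
move=> Hu.
have evpc z m' n' (M : 'M[C]_(m',n')) :
    map_mx (horner_eval z) (map_mx (@polyC C) M) = M.
  by apply/matrixP => i j; rewrite !mxE /= horner_evalE hornerC.
pose Mx : 'M[{poly C}]_n := 1%:M - 'X *: map_mx (@polyC C) alpha.
pose d := \det Mx.
pose N := d *: map_mx (@polyC C) delta +
          'X *: (map_mx (@polyC C) gamma *m \adj Mx *m map_mx (@polyC C) beta).
have ev z : map_mx (horner_eval z) Mx = 1%:M - z *: alpha.
  by rewrite map_mxB map_mx1 map_mxZ evpc /= horner_evalE hornerX.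
have dz z : d.[z] = \det (1%:M - z *: alpha).
  by rewrite -ev det_map_mx /= horner_evalE.
exists N, d; split.
  by move=> z z1; have := Hu z z1; rewrite unitmxE unitfE dz.
move=> z Hz.
have d0 : d.[z] != 0 by move: Hz; rewrite unitmxE unitfE dz.
have -> : map_mx (fun P => P.[z] / d.[z]) N = (d.[z])^-1 *: map_mx (horner_eval z) N.
  by apply/matrixP => i j; rewrite !mxE horner_evalE mulrC.
rewrite map_mxD !map_mxZ !map_mxM map_mx_adj ev !evpc /= !horner_evalE hornerX.
rewrite scalerDr scalerA mulVf // scale1r /realize; congr (_ + _).
rewrite /invmx Hz -scalemxAr -scalemxAl !scalerA dz; congr (_ *: _).
by rewrite mulrC.
Qed.


Lemma mxDE m n (A B : 'M[C]_(m,n)) i j : (A + B) i j = A i j + B i j.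
Proof. by rewrite !mxE. Qed.

Lemma defW n m (Y : 'M[C]_n) :
  (forall (w : 'cV[C]_n) t, 0 <= t -> (adjmx w *m Y *m w) 0 0 + t = 0 -> w = 0) ->
  forall w : 'cV[C]_(n + m),
    (adjmx w *m block_mx Y 0 0 1%:M *m w) 0 0 = 0 -> w = 0.
Proof.
move=> H w; rewrite -[w]vsubmxK adjmx_col mul_row_block mul_row_col.
rewrite !mulmx0 !addr0 add0r mulmx1 mxDE => E.
have w1 := H _ _ (nq_ge0 _ _) E.
move: E; rewrite w1 mulmx0 mxE add0r => /nq_eq0 ->.
by rewrite col_mx0.
Qed.

Lemma expSm n (A : 'M[C]_n) j : A ^+ j.+1 = A ^+ j *m A.
Proof. by rewrite exprSr mulmxE. Qed.

Lemma expSm' n (A : 'M[C]_n) j : A ^+ j.+1 = A *m A ^+ j.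
Proof. by rewrite exprS mulmxE. Qed.

Lemma zmod_aux3 (V : zmodType) (a b c x y w : V) :
  (a + x) - (b + y) - (c + w) = (a - b - c) + (x - y - w).
Proof. by rewrite !opprD [(a + x) + _]addrACA; exact: addrACA. Qed.


Theorem main_gen (m p q r n : nat)
  (A : 'M[C]_n) (Cm : 'M[C]_(m, n))
  (B1 : 'M[C]_(n, p)) (B2 : 'M[C]_(n, q)) (B3 : 'M[C]_(n, r))
  (D1 : 'M[C]_(m, p)) (D2 : 'M[C]_(m, q)) (D3 : 'M[C]_(m, r))
  (Q Y Ups : 'M[C]_n) (Mp : 'M[C]_(n + p)) :
  stable_mx A ->
  observable Cm A ->
  obs_gramian Cm A Y ->
  (forall i j : nat,
      toep_gram_block (markov D1 Cm A B1) i j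
    - toep_gram_block (markov D2 Cm A B2) i j
    - toep_gram_block (markov D3 Cm A B3) i j
    = Cm *m A ^+ i *m Q *m (adjmx A) ^+ j *m adjmx Cm) ->
  adjmx Ups = Ups -> Ups *m Ups = Q ->
  moore_penrose
    (block_mx (Ups *m Y *m Ups) (Ups *m Y *m B1)
              (adjmx B1 *m Y *m Ups) (adjmx D1 *m D1 + adjmx B1 *m Y *m B1)) Mp ->
  let U : 'M[C]_(n + p, n + (q + r)) :=
    Mp *m block_mx (Ups *m Y *m A *m Ups)
                   (row_mx (Ups *m Y *m B2) (Ups *m Y *m B3))
                   (adjmx D1 *m Cm *m Ups + adjmx B1 *m Y *m A *m Ups)
                   (row_mx (adjmx D1 *m D2 + adjmx B1 *m Y *m B2)
                           (adjmx D1 *m D3 + adjmx B1 *m Y *m B3)) in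
  let alpha := ulsubmx U in
  let beta1 := lsubmx (ursubmx U) in
  let beta2 := rsubmx (ursubmx U) in
  let gamma := dlsubmx U in
  let delta1 := lsubmx (drsubmx U) in
  let delta2 := rsubmx (drsubmx U) in
  let G := realize D1 Cm A B1 in
  let K := realize D2 Cm A B2 in
  let F := realize D3 Cm A B3 in
  let X := realize delta1 gamma alpha beta1 in
  let Psi := realize delta2 gamma alpha beta2 in
  let dom := fun z : C => (1%:M - z *: alpha) \in unitmx in
  partial_isometry U /\
  (stable_rational dom X /\
   (forall z : C, `|z| < 1 -> G z *m X z = K z) /\
   (forall z : C, `|z| < 1 -> contraction (X z))) /\
  (stable_rational dom Psi /\
   (forall z : C, `|z| < 1 -> contraction (Psi z)) /\
   (forall z : C, `|z| < 1 -> G z *m Psi z = F z)).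
Proof.
move=> HA Hobs HY Htoep UpsA HUU HMP.
move=> U alpha beta1 beta2 gamma delta1 delta2 G K F X Psi dom.
have E0 : D1 *m adjmx D1 - D2 *m adjmx D2 - D3 *m adjmx D3 =
          Cm *m Q *m adjmx Cm.
  by have := Htoep 0%N 0%N; rewrite !toep00 /= !expr0 !mulmx1.
have E1 : B1 *m adjmx D1 - B2 *m adjmx D2 - B3 *m adjmx D3 =
          A *m Q *m adjmx Cm.
  apply/eqP; rewrite -subr_eq0; apply/eqP; apply: (obs_mx _ _ _ Cm A _ Hobs) => j.
  have := Htoep j.+1 0%N; rewrite !toepS0 /= expr0 mulmx1 expSm => H.
  by rewrite !mulmxBr !mulmxA H !mulmxA subrr.
have E2 : B1 *m adjmx B1 - B2 *m adjmx B2 - B3 *m adjmx B3 = A *m Q *m adjmx A - Q.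
  apply/eqP; rewrite -subr_eq0; apply/eqP.
  set Z := (X in X = 0).
  have HZ i j : Cm *m A ^+ i *m (Z *m (adjmx A ^+ j *m adjmx Cm)) = 0.
    have := Htoep i.+1 j.+1; rewrite !toep_rec zmod_aux3 Htoep /= => H.
    move: H => /(canRL (addrK _)) H.
    rewrite /Z !mulmxBl !mulmxBr !adjmxM !adjmxX !mulmxA in H *.
    rewrite (expSm _ A i) (expSm' _ (adjmx A) j) !mulmxA in H.
    by rewrite H subrr.
  have Z1 j : Z *m (adjmx A ^+ j *m adjmx Cm) = 0
    := obs_mx _ _ _ Cm A _ Hobs (fun i => HZ i j).
  have Z2 : adjmx Z = 0.
    apply: (obs_mx _ _ _ Cm A _ Hobs) => j.
    by move: (Z1 j) => /(congr1 (@adjmx C _ _)); rewrite !adjmxM adjmxX !adjmxK adjmx0.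
  by rewrite -[Z]adjmxK Z2 adjmx0.
set M1 := block_mx Ups B1 (0 : 'M_(m,n)) D1.
set M2 := block_mx (A *m Ups) (row_mx B2 B3) (Cm *m Ups) (row_mx D2 D3).
set W := block_mx Y 0 0 (1%:M : 'M[C]_m).
have H12 : M1 *m adjmx M1 = M2 *m adjmx M2.
  rewrite /M1 /M2 !adjmx_block !adjmx_row !mulmx_block !mul_row_col !adjmx0.
  rewrite !mulmx0 !mul0mx ?add0r ?addr0 !adjmxM UpsA !mulmxA HUU.
  rewrite -(mulmxA A Ups Ups) -(mulmxA Cm Ups Ups) HUU.
  have QA : adjmx Q = Q by rewrite -HUU adjmxM UpsA.
  have hUR := zL1 E1.
  congr block_mx => //.
  - exact: zL2 E2.
  - move: hUR => /(congr1 (@adjmx C _ _)).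
    by rewrite !adjmxD !adjmxM !adjmxK QA !mulmxA.
  - exact: zL1 E0.
have HS : adjmx M1 *m W *m M1 = block_mx (Ups *m Y *m Ups) (Ups *m Y *m B1)
    (adjmx B1 *m Y *m Ups) (adjmx D1 *m D1 + adjmx B1 *m Y *m B1).
  rewrite /M1 /W adjmx_block adjmx0 !mulmx_block.
  rewrite !mulmx0 !mul0mx ?add0r ?addr0 mulmx1 UpsA.
  have -> : (0 : 'M_(n,m)) *m D1 = 0 by rewrite mul0mx.
  by rewrite addr0 [adjmx D1 *m D1 + _]addrC.
have HT : adjmx M1 *m W *m M2 = block_mx (Ups *m Y *m A *m Ups)
                   (row_mx (Ups *m Y *m B2) (Ups *m Y *m B3))
                   (adjmx D1 *m Cm *m Ups + adjmx B1 *m Y *m A *m Ups)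
                   (row_mx (adjmx D1 *m D2 + adjmx B1 *m Y *m B2)
                           (adjmx D1 *m D3 + adjmx B1 *m Y *m B3)).
  rewrite /M1 /M2 /W adjmx_block adjmx0 !mulmx_block.
  rewrite !mulmx0 !mul0mx ?add0r ?addr0 mulmx1 UpsA.
  have -> : (0 : 'M_(n,m)) *m (Cm *m Ups) = 0 by rewrite mul0mx.
  have -> : (0 : 'M_(n,m)) *m row_mx D2 D3 = 0 by rewrite mul0mx.
  rewrite !addr0 !mul_mx_row add_row_mx !mulmxA.
  by congr block_mx; [rewrite addrC | congr row_mx; rewrite addrC].
have Hdef : forall u : 'cV_(n+p),
    (adjmx (M1 *m u) *m W *m (M1 *m u)) 0 0 = 0 -> M1 *m u = 0.
  move=> u; apply: (defW n m Y) => w t t0 Hw.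
  exact: (obs_pos _ _ _ _ _ HY Hobs w t t0 Hw).
rewrite -HS in HMP.
have L := lurk _ _ _ M1 M2 W Mp H12 Hdef HMP; cbv zeta in L.
have eU : U = Mp *m (adjmx M1 *m W *m M2) by rewrite HT.
rewrite -eU in L; case: L => HM2 HUU' [G' HG'].
have eUb : U = block_mx alpha (row_mx beta1 beta2) gamma (row_mx delta1 delta2).
  by rewrite /alpha /beta1 /beta2 /gamma /delta1 /delta2 !hsubmxK submxK.
have Hc v : nq (U *m v) <= nq v := contr_of_pi _ _ U v HUU'.
have HMx : forall x : 'cV_n, Ups *m x = 0 -> M1 *m (U *m col_mx x 0) = 0.
  move=> x Ux; rewrite mulmxA HM2 /M2 mul_block_col !mulmx0 !addr0 -!mulmxA Ux.
  by rewrite !mulmx0 col_mx0.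
have := HM2; rewrite eUb /M1 /M2 mulmx_block => /eq_block_mx [eA eB eC eD].
have Hua z : `|z| <= 1 -> (1%:M - z *: alpha) \in unitmx.
  by move=> z1; apply: (alpha_unit _ _ _ _ _ _ _ _ _ U G' z HA Hc eA HG' HMx z1).
move: eB; rewrite !mul_mx_row add_row_mx => /eq_row_mx [eB1 eB2].
have eC' : D1 *m gamma = Cm *m Ups.
  have z0 : (0 : 'M_(m,n)) *m alpha = 0 by rewrite mul0mx.
  by rewrite -eC z0 add0r.
have eD' : row_mx (D1 *m delta1) (D1 *m delta2) = row_mx D2 D3.
  have z0 : (0 : 'M_(m,n)) *m row_mx beta1 beta2 = 0 by rewrite mul0mx.
  by rewrite -eD z0 add0r mul_mx_row.
case: (eq_row_mx eD') => eD1 eD2.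
have HcX : forall v, nq (block_mx alpha beta1 gamma delta1 *m v) <= nq v.
  move=> v; rewrite -[v]vsubmxK.
  have := Hc (col_mx (usubmx v) (col_mx (dsubmx v) 0)).
  rewrite eUb !mul_block_col !mul_row_col !mulmx0 !addr0 !nq_col nq0 addr0.
  by [].
have HcP : forall v, nq (block_mx alpha beta2 gamma delta2 *m v) <= nq v.
  move=> v; rewrite -[v]vsubmxK.
  have := Hc (col_mx (usubmx v) (col_mx 0 (dsubmx v))).
  rewrite eUb !mul_block_col !mul_row_col !mulmx0 !add0r !nq_col nq0 add0r.
  by [].
clearbody U; split.
  split.
    by rewrite -eUb -!mulmxA [U *m (adjmx U *m U)]mulmxA HUU'.
  by rewrite -eUb adjmxM adjmxK.
split; [split; [|split] | split; [|split]].
- exact: stab_rat.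
- move=> z z1; rewrite /G /X /K /F /Psi; apply: (realize_mul _ _ _ _ _ _ _ _ _ _ _ _ _ _ _ _ z
     (stable_unit _ _ _ HA z1) (Hua z (ltW z1)) eA eB1 eC' eD1).
- by move=> z z1; apply: contr_real => //; [apply: ltW | apply: Hua; apply: ltW].
- exact: stab_rat.
- by move=> z z1; apply: contr_real => //; [apply: ltW | apply: Hua; apply: ltW].
- move=> z z1; rewrite /G /X /K /F /Psi; apply: (realize_mul _ _ _ _ _ _ _ _ _ _ _ _ _ _ _ _ z
     (stable_unit _ _ _ HA z1) (Hua z (ltW z1)) eA eB2 eC' eD2).
Qed.

End Gen.

Local Open Scope complex_scope.
Local Open Scope ring_scope.

Theorem theorem1p2 (R : realType) (m p q r n : nat)
  (A : 'M[R[i]]_n) (Cm : 'M[R[i]]_(m, n))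
  (B1 : 'M[R[i]]_(n, p)) (B2 : 'M[R[i]]_(n, q)) (B3 : 'M[R[i]]_(n, r))
  (D1 : 'M[R[i]]_(m, p)) (D2 : 'M[R[i]]_(m, q)) (D3 : 'M[R[i]]_(m, r))
  (P1 P2 P3 Y Ups : 'M[R[i]]_n) (Mp : 'M[R[i]]_(n + p)) :
  (* A stable, and the realization of [G K] is minimal *)
  stable_mx A ->
  observable Cm A -> controllable A (row_mx B1 B2) ->
  (* Gramians *)
  ctrl_gramian A B1 P1 -> ctrl_gramian A B2 P2 -> ctrl_gramian A B3 P3 ->
  obs_gramian Cm A Y ->
  (* T_G T_G^* - T_K T_K^* - T_F T_F^* = W_obs (P3 + P2 - P1) W_obs^* *)
  (forall i j : nat,
      toep_gram_block (markov D1 Cm A B1) i j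
    - toep_gram_block (markov D2 Cm A B2) i j
    - toep_gram_block (markov D3 Cm A B3) i j
    = Cm *m A ^+ i *m (P3 + P2 - P1) *m (adjmx A) ^+ j *m adjmx Cm) ->
  psdmx (P3 + P2 - P1) ->
  (* Ups = (P3 + P2 - P1)^{1/2} *)
  psdmx Ups -> Ups *m Ups = P3 + P2 - P1 ->
  (* Mp = Moore-Penrose inverse of the first block matrix *)
  moore_penrose
    (block_mx (Ups *m Y *m Ups) (Ups *m Y *m B1)
              (adjmx B1 *m Y *m Ups) (adjmx D1 *m D1 + adjmx B1 *m Y *m B1)) Mp ->
  let U : 'M[R[i]]_(n + p, n + (q + r)) :=
    Mp *m block_mx (Ups *m Y *m A *m Ups)
                   (row_mx (Ups *m Y *m B2) (Ups *m Y *m B3))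
                   (adjmx D1 *m Cm *m Ups + adjmx B1 *m Y *m A *m Ups)
                   (row_mx (adjmx D1 *m D2 + adjmx B1 *m Y *m B2)
                           (adjmx D1 *m D3 + adjmx B1 *m Y *m B3)) in
  let alpha := ulsubmx U in
  let beta1 := lsubmx (ursubmx U) in
  let beta2 := rsubmx (ursubmx U) in
  let gamma := dlsubmx U in
  let delta1 := lsubmx (drsubmx U) in
  let delta2 := rsubmx (drsubmx U) in
  let G := realize D1 Cm A B1 in
  let K := realize D2 Cm A B2 in
  let F := realize D3 Cm A B3 in
  let X := realize delta1 gamma alpha beta1 in
  let Psi := realize delta2 gamma alpha beta2 in
  let dom := fun z : R[i] => (1%:M - z *: alpha) \in unitmx in
  partial_isometry U /\
  (stable_rational dom X /\
   (forall z : R[i], `|z| < 1 -> G z *m X z = K z) /\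
   (forall z : R[i], `|z| < 1 -> contraction (X z))) /\
  (stable_rational dom Psi /\
   (forall z : R[i], `|z| < 1 -> contraction (Psi z)) /\
   (forall z : R[i], `|z| < 1 -> G z *m Psi z = F z)).
Proof.
move=> HA Hobs _ _ _ _ HY Htoep _ [UpsA _] HUU HMP.
exact: (@main_gen _ m p q r n A Cm B1 B2 B3 D1 D2 D3 (P3 + P2 - P1) Y Ups Mp
          HA Hobs HY Htoep UpsA HUU HMP).
Qed.
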